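(* For every $J\subseteq[n]$, the arrangement $\widetilde{\mathcal B_J}$ is free with exponents $(b_{J,1},\dots,b_{J,n})$, where $b_{J,i}=2\,|\{1,\dots,i-1\}\setminus J|+1$.
   Context: $H_\alpha$ is the zero set in $\mathbb C^n$ of a nonzero linear form $\alpha$. $\operatorname{Der}(\mathbb C[\mathbf x_n])=\bigoplus_i\mathbb C[\mathbf x_n]\partial_i$; a derivation $\sum_if_i\partial_i$ is homogeneous of degree $d$ if all $f_i$ are homogeneous of degree $d$. For an arrangement $\mathcal A$, $\operatorname{Der}(\mathcal A)=\{\delta:\alpha\mid\delta(\alpha)\ \forall H_\alpha\in\mathcal A\}$; $\mathcal A$ is free with exponents $(e_1,\dots,e_n)$ if $\operatorname{Der}(\mathcal A)$ has a $\mathbb C[\mathbf x_n]$-basis of homogeneous derivations of degrees $e_1,\dots,e_n$. For $J\subseteq[n]$, $\widetilde{\mathcal B_J}$ is the arrangement consisting of $H_{x_j}$ for all $1\le j\le n$ together with $H_{x_j-x_i}$ and $H_{x_j+x_i}$ for all $j\in[n]\setminus J$ and $j<i\le n$. *)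

(* Defs.v *)
From HB Require Import structures.
From mathcomp Require Import all_boot all_order all_algebra.
From mathcomp Require Import reals.
From mathcomp Require Import complex.
From mathcomp Require Import mpoly.
Set Implicit Arguments. Unset Strict Implicit. Unset Printing Implicit Defensive.
Import Order.TTheory GRing.Theory Num.Theory.
Local Open Scope ring_scope.

Section Arr.
Context {F : fieldType} {n : nat}.

(* polynomial ring F[x_1..x_n] is {mpoly F[n]}; variable x_{i+1} is 'X_i *)

(* A derivation sum_i f_i d_i is represented by its coefficient vector (f_i). *)
Definition derivation := {ffun 'I_n -> {mpoly F[n]}}.

Definition der_apply (delta : derivation) (p : {mpoly F[n]}) : {mpoly F[n]} :=
  \sum_(i < n) delta i * mderiv i p.

Definition der_homog (d : nat) (delta : derivation) : Prop :=
  forall i, delta i \is d.-homog.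

Definition mdvd (a b : {mpoly F[n]}) : Prop := exists q, b = q * a.

Definition is_linear_form (alpha : {mpoly F[n]}) : Prop :=
  exists a : 'I_n -> F, (exists i, a i != 0) /\ alpha = \sum_(i < n) a i *: 'X_i.

(* An arrangement is given by the collection of defining linear forms
   (a predicate on linear forms);  Der(A) = {delta : alpha | delta(alpha)}. *)
Definition in_Der (A : {mpoly F[n]} -> Prop) (delta : derivation) : Prop :=
  forall alpha, A alpha -> mdvd alpha (der_apply delta alpha).

Definition der_comb (g : 'I_n -> {mpoly F[n]}) (theta : 'I_n -> derivation)
  : derivation := [ffun i => \sum_(k < n) g k * theta k i].

Definition free_with_exponents (A : {mpoly F[n]} -> Prop) (e : 'I_n -> nat)
  : Prop :=
  exists theta : 'I_n -> derivation,
    [/\ forall k, der_homog (e k) (theta k),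
        forall k, in_Der A (theta k),
        forall delta, in_Der A delta ->
          exists g : 'I_n -> {mpoly F[n]}, delta = der_comb g theta
      & forall g : 'I_n -> {mpoly F[n]},
          der_comb g theta = 0 -> forall k, g k = 0].

(* The arrangement tilde B_J (indices shifted to 0..n-1). *)
Definition tildeB (J : {set 'I_n}) (alpha : {mpoly F[n]}) : Prop :=
  (exists j : 'I_n, alpha = 'X_j) \/
  (exists j i : 'I_n, [/\ j \notin J, (j < i)%N &
        (alpha = 'X_j - 'X_i \/ alpha = 'X_j + 'X_i)]).

(* b_{J,k+1} = 2 |{1..k} \ J| + 1, in 0-based indexing *)
Definition expB (J : {set 'I_n}) (k : 'I_n) : nat :=
  (2 * #|[set m : 'I_n | (m < k)%N & m \notin J]| + 1)%N.

End Arr.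

(* Main.v *)
Set Warnings "-notation-overridden,-ambiguous-paths,-notation-incompatible-prefix".
Require Import Defs.
From HB Require Import structures.
From mathcomp Require Import all_boot all_order all_algebra.
From mathcomp Require Import reals.
From mathcomp Require Import complex.
From mathcomp Require Import mpoly.
From mathcomp Require Import ring.
Set Implicit Arguments. Unset Strict Implicit. Unset Printing Implicit Defensive.
Import GRing.Theory.
Local Open Scope ring_scope.

Section Gen.
Variables (F : fieldType) (n : nat).
Local Notation MP := {mpoly F[n]}.
Implicit Types (p q a b c d : MP).

Lemma mdvd_refl p : mdvd p p.
Proof. by exists 1; rewrite mul1r. Qed.

Lemma mdvd0 p : mdvd p 0.
Proof. by exists 0; rewrite mul0r. Qed.

Lemma mdvdD a p q : mdvd a p -> mdvd a q -> mdvd a (p + q).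
Proof. by move=> [x ->] [y ->]; exists (x + y); rewrite mulrDl. Qed.

Lemma mdvdN a p : mdvd a p -> mdvd a (- p).
Proof. by move=> [x ->]; exists (- x); rewrite mulNr. Qed.

Lemma mdvdB a p q : mdvd a p -> mdvd a q -> mdvd a (p - q).
Proof. by move=> hp hq; apply: mdvdD => //; apply: mdvdN. Qed.

Lemma mdvdMl a p q : mdvd a p -> mdvd a (q * p).
Proof. by move=> [x ->]; exists (q * x); rewrite mulrA. Qed.

Lemma mderivXU (i j : 'I_n) : mderiv i ('X_j : MP) = (i == j)%:R.
Proof.
rewrite mderivX mnm1E eq_sym; case: eqP => [->|_]; last by rewrite scale0r.
have -> : (U_(j) - U_(j))%MM = 0%MM by apply/mnmP => k; rewrite mnmBE subnn mnm0E.
by rewrite mpolyX0 scale1r.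
Qed.

Lemma der_applyX (dl : @derivation F n) (j : 'I_n) : der_apply dl 'X_j = dl j.
Proof.
rewrite /der_apply (bigD1 j) //= mderivXU eqxx mulr1 big1 ?addr0 //.
by move=> i /negbTE hi; rewrite mderivXU hi mulr0.
Qed.

Lemma der_applyD (dl : @derivation F n) p q :
  der_apply dl (p + q) = der_apply dl p + der_apply dl q.
Proof. by rewrite /der_apply -big_split; apply: eq_bigr => i _; rewrite mderivD mulrDr. Qed.

Lemma der_applyB (dl : @derivation F n) p q :
  der_apply dl (p - q) = der_apply dl p - der_apply dl q.
Proof. by rewrite /der_apply -sumrB; apply: eq_bigr => i _; rewrite mderivB mulrBr. Qed.

Lemma der_apply_lin (d1 d2 : @derivation F n) h p :
  der_apply [ffun i => d1 i - h * d2 i] p = der_apply d1 p - h * der_apply d2 p.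
Proof.
rewrite /der_apply mulr_sumr -sumrB; apply: eq_bigr => i _.
by rewrite ffunE mulrBl mulrA.
Qed.

Lemma der_combE g (th : 'I_n -> @derivation F n) i :
  der_comb g th i = \sum_(k < n) g k * th k i.
Proof. by rewrite ffunE. Qed.

Lemma dvd_prod_diff (I : finType) (A : pred I) (g : I -> MP) u v :
  mdvd (u - v) (\prod_(m in A) (u - g m) - \prod_(m in A) (v - g m)).
Proof.
apply: (big_rec2 (fun y1 y2 => mdvd (u - v) (y1 - y2))); first by rewrite subrr; apply: mdvd0.
move=> i y1 y2 _ [x hx]; exists ((u - g i) * x + y2).
have -> : (u - g i) * y1 - (v - g i) * y2 = (u - g i) * (y1 - y2) + (u - v) * y2 by ring.
by rewrite hx; ring.
Qed.


Definition sub (k : 'I_n) c : MP -> MP :=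
  comp_mpoly [tuple if i == k then c else ('X_i : MP) | i < n].

Lemma subX k c (i : 'I_n) : sub k c 'X_i = if i == k then c else 'X_i.
Proof. by rewrite /sub comp_mpolyXU -tnth_nth tnth_mktuple. Qed.

Lemma subD k c p q : sub k c (p + q) = sub k c p + sub k c q.
Proof. exact: comp_mpolyD. Qed.
Lemma subB k c p q : sub k c (p - q) = sub k c p - sub k c q.
Proof. exact: comp_mpolyB. Qed.
Lemma subM k c p q : sub k c (p * q) = sub k c p * sub k c q.
Proof. exact: rmorphM. Qed.
Lemma subN k c p : sub k c (- p) = - sub k c p.
Proof. exact: comp_mpolyN. Qed.
Lemma subZ k c x p : sub k c (x *: p) = x *: sub k c p.
Proof. exact: comp_mpolyZ. Qed.
Lemma sub0 k c : sub k c 0 = 0.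
Proof. exact: comp_mpoly0. Qed.
Lemma sub1 k c : sub k c 1 = 1.
Proof. exact: comp_mpoly1. Qed.
Lemma subXn k c p e : sub k c (p ^+ e) = sub k c p ^+ e.
Proof. exact: rmorphXn. Qed.
Lemma sub_prod k c (I : finType) (A : pred I) (G : I -> MP) :
  sub k c (\prod_(i in A) G i) = \prod_(i in A) sub k c (G i).
Proof. exact: rmorph_prod. Qed.

Section Fix.
Variables (k : 'I_n) (c : MP).
Hypothesis fixc : sub k c c = c.
Local Notation D p := (exists q, p - sub k c p = q * ('X_k - c)).

Lemma sub_rem p : D p.
Proof.
have D1 : D 1 by exists 0; rewrite sub1 subrr mul0r.
have DM : forall p q, D p -> D q -> D (p * q).
  move=> p1 q1 [x hx] [y hy]; exists (x * q1 + sub k c p1 * y).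
  have -> : p1 * q1 - sub k c (p1 * q1) =
     (p1 - sub k c p1) * q1 + sub k c p1 * (q1 - sub k c q1) by rewrite subM; ring.
  by rewrite hx hy; ring.
have DX : forall i, D 'X_i.
  move=> i; rewrite subX; case: eqP => [->|_]; first by exists 1; rewrite mul1r.
  by exists 0; rewrite subrr mul0r.
elim/mpolyind: p => [|x m p _ _ [y hy]]; first by exists 0; rewrite sub0 subrr mul0r.
have [z hz] : D 'X_[m].
  rewrite mpolyXE_id; apply: (big_ind (fun y => D y)) => //.
  move=> i _; elim: (m i) => [|e IH]; rewrite ?expr0 // exprS; exact: DM.
exists (x *: z + y).
rewrite subD subZ; have -> : x *: 'X_[m] + p - (x *: sub k c 'X_[m] + sub k c p)
  = x *: ('X_[m] - sub k c 'X_[m]) + (p - sub k c p) by rewrite scalerBr; ring.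
by rewrite hz hy scalerAl mulrDl.
Qed.

Lemma sub0_dvd p : sub k c p = 0 -> mdvd ('X_k - c) p.
Proof. by move=> h; have [q hq] := sub_rem p; exists q; rewrite -hq h subr0. Qed.

Lemma dvd_sub0 p : mdvd ('X_k - c) p -> sub k c p = 0.
Proof. by move=> [q ->]; rewrite subM subB subX eqxx fixc subrr mulr0. Qed.

Lemma dvd_step d p : mdvd d p -> mdvd ('X_k - c) p -> sub k c d != 0 ->
  mdvd (('X_k - c) * d) p.
Proof.
move=> [q hq] /dvd_sub0 h0 nz.
have : sub k c q * sub k c d == 0 by rewrite -subM -hq h0.
rewrite mulf_eq0 (negbTE nz) orbF => /eqP h.
have [r hr] := sub0_dvd h; exists r; by rewrite hq hr mulrA.
Qed.
End Fix.


Lemma nzX (a : 'I_n) : ('X_a : MP) != 0.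
Proof.
apply/eqP => h; have := congr1 (mcoeff U_(a)) h; rewrite mcoeffXU mcoeff0 eqxx => /eqP.
by rewrite oner_eq0.
Qed.

Lemma nzXB (a b : 'I_n) : a != b -> ('X_a - 'X_b : MP) != 0.
Proof.
move=> ab; apply/eqP => h; have := congr1 (mcoeff U_(a)) h.
rewrite mcoeffB !mcoeffXU eqxx eq_sym (negbTE ab) subr0 mcoeff0 => /eqP.
by rewrite oner_eq0.
Qed.

Lemma nzXD (a b : 'I_n) : a != b -> ('X_a + 'X_b : MP) != 0.
Proof.
move=> ab; apply/eqP => h; have := congr1 (mcoeff U_(a)) h.
rewrite mcoeffD !mcoeffXU eqxx eq_sym (negbTE ab) addr0 mcoeff0 => /eqP.
by rewrite oner_eq0.
Qed.

Lemma nzsq (a b : 'I_n) : a != b -> ('X_a ^+ 2 - 'X_b ^+ 2 : MP) != 0.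
Proof.
move=> ab; have -> : ('X_a ^+ 2 - 'X_b ^+ 2 : MP) = ('X_a - 'X_b) * ('X_a + 'X_b) by ring.
by rewrite mulf_neq0 ?nzXB ?nzXD.
Qed.

Lemma nz2X (a : 'I_n) : (2 : F) != 0 -> (- 'X_a - 'X_a : MP) != 0.
Proof.
move=> h2; apply/eqP => h; have := congr1 (mcoeff U_(a)) h.
rewrite mcoeffB mcoeffN !mcoeffXU eqxx mcoeff0 => /eqP.
rewrite -opprD oppr_eq0; apply/negP; exact: h2.
Qed.

Lemma sub_prods k c (r : seq 'I_n) (G : 'I_n -> MP) :
  sub k c (\prod_(i <- r) G i) = \prod_(i <- r) sub k c (G i).
Proof. exact: rmorph_prod. Qed.

Lemma dvdP_seq (h2 : (2 : F) != 0) k p (s : seq 'I_n) : uniq s -> k \notin s -> mdvd 'X_k p ->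
 (forall m, m \in s -> mdvd ('X_k - 'X_m) p /\ mdvd ('X_k + 'X_m) p) ->
 mdvd ('X_k * \prod_(m <- s) ('X_k ^+ 2 - 'X_m ^+ 2)) p.
Proof.
elim: s => [|m s IH] /= us ks hk hs; first by rewrite big_nil mulr1.
move: us ks => /andP [ms us]; rewrite inE negb_or => /andP [km ks].
have {IH} hd := IH us ks hk (fun m' hm' => hs m' (ltac:(by rewrite inE hm' orbT))).
have [h1 h2'] := hs m (mem_head _ _).
have mk : (m == k) = false by rewrite eq_sym (negbTE km).
have subs : forall c, sub k c (\prod_(m' <- s) ('X_k ^+ 2 - 'X_m' ^+ 2)) =
     \prod_(m' <- s) (c ^+ 2 - 'X_m' ^+ 2).
  move=> c; rewrite sub_prods big_seq [RHS]big_seq; apply: eq_bigr => m' hm'.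
  rewrite subB !subXn !subX eqxx.
  by have -> : (m' == k) = false by apply/negbTE; apply: contraNneq ks => <-.
have nzprod : forall x : MP, x ^+ 2 = 'X_m ^+ 2 -> \prod_(m' <- s) (x ^+ 2 - 'X_m' ^+ 2) != 0.
  move=> x ->; rewrite prodf_seq_neq0; apply/allP => m' hm' /=; apply: nzsq.
  by apply: contraNneq ms => ->.
have fixP : sub k 'X_m 'X_m = 'X_m by rewrite subX mk.
have step1 := dvd_step fixP hd h1.
rewrite subM subX eqxx subs mulf_neq0 ?nzX ?nzprod // in step1.
have fixN : sub k (- 'X_m) (- 'X_m) = - 'X_m by rewrite subN subX mk.
have h2'' : mdvd ('X_k - - 'X_m) p by rewrite opprK.
have := dvd_step fixN (step1 isT) h2''.
rewrite !subM subB !subX eqxx mk subs mulf_neq0 ?nz2X ?mulf_neq0 ?oppr_eq0 ?nzX ?nzprod ?sqrrN //.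
move=> /(_ isT) [q hq]; exists q; rewrite hq big_cons; ring.
Qed.


Section Arr.
Variable J : {set 'I_n}.

Definition SJ (k : 'I_n) : {set 'I_n} := [set m : 'I_n | (m < k)%N & m \notin J].
Definition Qp k (t : MP) := \prod_(m in SJ k) (t - 'X_m ^+ 2).
Definition Pp k (t : MP) := t * Qp k (t ^+ 2).
Definition theta (k : 'I_n) : @derivation F n :=
  [ffun i : 'I_n => if (k <= i)%N then Pp k 'X_i else 0].

Lemma P_minus k a b : mdvd (a - b) (Pp k a - Pp k b).
Proof.
have [q hq] := dvd_prod_diff (mem (SJ k)) (fun m => 'X_m ^+ 2) (a ^+ 2) (b ^+ 2).
have E : Qp k (a ^+ 2) = q * (a ^+ 2 - b ^+ 2) + Qp k (b ^+ 2) by rewrite /Qp -hq; ring.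
by exists (a * q * (a + b) + Qp k (b ^+ 2)); rewrite /Pp E; ring.
Qed.

Lemma P_plus k a b : mdvd (a + b) (Pp k a + Pp k b).
Proof.
have [q hq] := dvd_prod_diff (mem (SJ k)) (fun m => 'X_m ^+ 2) (a ^+ 2) (b ^+ 2).
have E : Qp k (a ^+ 2) = q * (a ^+ 2 - b ^+ 2) + Qp k (b ^+ 2) by rewrite /Qp -hq; ring.
by exists (a * q * (a - b) + Qp k (b ^+ 2)); rewrite /Pp E; ring.
Qed.

Lemma theta_nJ k (j : 'I_n) : j \notin J -> theta k j = Pp k 'X_j.
Proof.
move=> jJ; rewrite ffunE; case: leqP => // jk.
have jS : j \in SJ k by rewrite inE jk jJ.
by rewrite /Pp /Qp (bigD1 j) //= subrr mul0r mulr0.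
Qed.

Lemma theta_Der k : in_Der (tildeB J) (theta k).
Proof.
move=> al [[j ->]|[j [i [jJ ji hal]]]].
  rewrite der_applyX ffunE; case: ifP => _; last exact: mdvd0.
  by exists (Qp k ('X_j ^+ 2)); rewrite /Pp mulrC.
have [ik|ki] := ltnP i k.
  have tz : forall l : 'I_n, (l < k)%N -> theta k l = 0.
    by move=> l lk; rewrite ffunE leqNgt lk.
  have t1 := tz _ ik; have t2 := tz _ (ltn_trans ji ik).
  by case: hal => ->; rewrite ?der_applyB ?der_applyD !der_applyX t1 t2 ?subr0 ?addr0; apply: mdvd0.
have ti : theta k i = Pp k 'X_i by rewrite ffunE ki.
case: hal => ->; rewrite ?der_applyB ?der_applyD !der_applyX ti theta_nJ //.
  exact: P_minus.
exact: P_plus.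
Qed.

Lemma homog_prodset (A : {set 'I_n}) (G : 'I_n -> MP) (e : nat) :
  (forall i, G i \is e.-homog) -> \prod_(i in A) G i \is (e * #|A|).-homog.
Proof.
move=> hG; rewrite -big_enum cardE; elim: (enum A) => [|x s IH] /=.
  by rewrite big_nil muln0 dhomog1.
by rewrite big_cons mulnS; apply: dhomogM.
Qed.

Lemma theta_homog k : der_homog (expB J k) (theta k).
Proof.
move=> i; rewrite ffunE; case: ifP => _; last exact: dhomog0.
rewrite /Pp /expB addnC; apply: dhomogM; first by rewrite dhomogX; apply/eqP; apply: mdeg1.
apply: homog_prodset => m; rewrite (_ : 2 = 1 * 2 + 0 - 0)%N //.
have hX : forall l : 'I_n, ('X_l : MP) ^+ 2 \is (1 * 2).-homog.
  by move=> l; apply: dhomogMn; rewrite dhomogX; apply/eqP; apply: mdeg1.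
by rewrite subn0 addn0; apply: rpredB.
Qed.


Lemma Pk_nz (k : 'I_n) : Pp k 'X_k != 0.
Proof.
rewrite /Pp /Qp mulf_neq0 ?nzX //; apply/prodf_neq0 => m; rewrite inE => /andP [mk _].
by apply: nzsq; rewrite neq_ltn mk orbT.
Qed.

Lemma indep g : der_comb g theta = 0 -> forall k, g k = 0.
Proof.
move=> h0; suff H : forall r (k : 'I_n), (k < r)%N -> g k = 0 by move=> k; apply: (H k.+1).
elim=> [//|r IH] k; rewrite ltnS leq_eqVlt => /orP [/eqP kr|]; last exact: IH.
have := congr1 (fun f : @derivation F n => f k) h0; rewrite /der_comb /= !ffunE.
rewrite (bigD1 k) //= big1 ?addr0.
  rewrite ffunE leqnn => /eqP; rewrite mulf_eq0 (negbTE (Pk_nz k)) orbF => /eqP //.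
move=> j jk; rewrite ffunE; case: leqP => jk'; last by rewrite mulr0.
have jlt : (j < k)%N by rewrite ltn_neqAle jk' andbT; exact: jk.
by rewrite IH ?mul0r // -kr.
Qed.

Lemma gen (h2 : (2 : F) != 0) r : forall dl, in_Der (tildeB J) dl ->
  (forall i : 'I_n, (i < n - r)%N -> dl i = 0) -> exists g, dl = der_comb g theta.
Proof.
elim: r => [|r IH] dl hD hz.
  exists (fun _ => 0); apply/ffunP => i; rewrite hz ?subn0 // !ffunE big1 // => j _.
  by rewrite mul0r.
have [nr|rn] := leqP n r.
  apply: IH => // i; have -> : (n - r = 0)%N by apply/eqP; rewrite subn_eq0.
  by [].
have kn : (n - r.+1 < n)%N by rewrite ltn_subrL (leq_ltn_trans (leq0n r) rn) andbT; case: (n) rn.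
set k := Ordinal kn.
have nrk : (n - r = k.+1)%N by rewrite /= subnSK.
have lk : forall i : 'I_n, (i < k)%N -> dl i = 0.
  by move=> i ik; apply: hz.
have hk : mdvd 'X_k (dl k).
  by have := hD 'X_k (or_introl (ex_intro _ k erefl)); rewrite der_applyX.
have hs : forall m, m \in enum (SJ k) ->
    mdvd ('X_k - 'X_m) (dl k) /\ mdvd ('X_k + 'X_m) (dl k).
  move=> m; rewrite mem_enum inE => /andP [mk mJ]; split.
    have := hD ('X_m - 'X_k) (or_intror (ex_intro _ m (ex_intro _ k (And3 mJ mk (or_introl erefl))))).
    rewrite der_applyB !der_applyX (lk m mk) => -[q hq]; exists q.
    have -> : dl k = - (0 - dl k) by ring.
    by rewrite hq -mulrN opprB.
  have := hD ('X_m + 'X_k) (or_intror (ex_intro _ m (ex_intro _ k (And3 mJ mk (or_intror erefl))))).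
  by rewrite der_applyD !der_applyX (lk m mk) add0r => -[q hq]; exists q; rewrite hq addrC.
have := dvdP_seq h2 (enum_uniq _) _ hk hs.
rewrite mem_enum inE ltnn /= big_enum => /(_ isT) [h hh].
set dl' : @derivation F n := [ffun i => dl i - h * theta k i].
have hD' : in_Der (tildeB J) dl'.
  move=> al hal; rewrite der_apply_lin; apply: mdvdB; first exact: hD.
  exact/mdvdMl/theta_Der.
have [g' hg'] : exists g, dl' = der_comb g theta.
  apply: IH => // i; rewrite nrk ltnS leq_eqVlt => /orP [/eqP ik|ik].
    have -> : i = k by apply: val_inj.
    by rewrite ffunE hh ffunE leqnn /Pp subrr.
  by rewrite ffunE lk // ffunE leqNgt ik mulr0 subrr.
exists (fun j => g' j + (j == k)%:R * h); apply/ffunP => i.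
have E : dl i - h * theta k i = der_comb g' theta i.
  by rewrite -hg' /dl' [RHS]ffunE.
rewrite -[dl i](subrK (h * theta k i)) E !der_combE.
rewrite [RHS](eq_bigr (fun j => g' j * theta j i + (j == k)%:R * h * theta j i));
  last by move=> j _; rewrite mulrDl.
rewrite big_split /=; congr (_ + _); rewrite (bigD1 k) //= eqxx mul1r big1 ?addr0 //.
by move=> j /negbTE ->; rewrite mul0r mul0r.
Qed.
End Arr.
End Gen.

Theorem mainTheorem17 (R : realType) (n : nat) (J : {set 'I_n}) :
  @free_with_exponents R[i] n (tildeB J) (expB J).
Proof.
have h2 : (2 : R[i]) != 0 by rewrite Num.Theory.pnatr_eq0.
exists (@theta R[i] n J); split.
- move=> k; exact: (@theta_homog R[i] n J k).
- move=> k; exact: (@theta_Der R[i] n J k).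
- move=> dl hD; apply: (@gen R[i] n J h2 n dl hD) => i; by rewrite subnn.
- exact: (@indep R[i] n J).
Qed.
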